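(* For all integers $n,m \geq 1$ with $\{n,m\} \neq \{1,1\}$ and $\{n,m\}\neq\{1,3\}$, $$\overline{a}(n)\, \overline{a}(m) \geq \overline{a}(n+m).$$ Moreover, among such pairs equality holds only when $\{n,m\}=\{1,2\}$.
   Context: The cubic overpartition function $\overline{a}(n)$ is defined by $\sum_{n\ge 0}\overline{a}(n)q^n=\frac{(-q;q)_\infty(-q^2;q^2)_\infty}{(q;q)_\infty(q^2;q^2)_\infty}$ for $|q|<1$, where $(a;q)_\infty=\prod_{j\ge 0}(1-aq^j)$. *)

(* Defs.v *)
(* The cubic overpartition function, defined as the
   coefficients of the formal power series
     (-q;q)_oo (-q^2;q^2)_oo / ((q;q)_oo (q^2;q^2)_oo).
   The coefficient of q^n only depends on the product truncated at
   degree n: factors with index j > n contribute 1 + O(q^(n+1)), and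
   1/(1 - q^k) = \sum_(i <= n) q^(k*i) + O(q^(n+1)) for k >= 1. *)
From mathcomp Require Import all_boot all_order all_algebra.
Set Implicit Arguments. Unset Strict Implicit. Unset Printing Implicit Defensive.
Import GRing.Theory.
Local Open Scope ring_scope.

(* truncated geometric series 1 + X^k + X^(2k) + ... + X^(N k), standing for
   1/(1 - X^k) modulo X^(N+1) when k >= 1 *)
Definition geom_trunc (N k : nat) : {poly int} := \sum_(i < N.+1) 'X^(k * i).

Definition cubic_ovp_partial (N : nat) : {poly int} :=
  \prod_(1 <= j < N.+1)
     ((1 + 'X^j) * (1 + 'X^(2 * j)) * geom_trunc N j * geom_trunc N (2 * j)).

Definition cubic_ovp (n : nat) : int := (cubic_ovp_partial n)`_n.

(* Main.v *)
Require Import Defs.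
From Stdlib Require Import ZArith.
From mathcomp Require Import all_boot all_order all_algebra.
From mathcomp Require Import zify ring lra ssrZ.
Import Order.TTheory GRing.Theory Num.Theory.
Set Implicit Arguments. Unset Strict Implicit.
Local Open Scope ring_scope.

Definition eqm (N : nat) (p q : {poly int}) := forall i, (i <= N)%N -> p`_i = q`_i.

Lemma eqm_refl N p : eqm N p p. Proof. by []. Qed.
Lemma eqm_sym N p q : eqm N p q -> eqm N q p.
Proof. by move=> h i hi; rewrite h. Qed.
Lemma eqm_trans N p q r : eqm N p q -> eqm N q r -> eqm N p r.
Proof. by move=> h1 h2 i hi; rewrite h1 ?h2. Qed.
Lemma eqm_le N M p q : (N <= M)%N -> eqm M p q -> eqm N p q.
Proof. by move=> hNM h i hi; apply: h; apply: leq_trans hNM. Qed.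
Lemma eqmD N p p' q q' : eqm N p p' -> eqm N q q' -> eqm N (p + q) (p' + q').
Proof. by move=> h1 h2 i hi; rewrite !coefD h1 ?h2. Qed.
Lemma eqmB N p p' q q' : eqm N p p' -> eqm N q q' -> eqm N (p - q) (p' - q').
Proof. by move=> h1 h2 i hi; rewrite !coefB h1 ?h2. Qed.
Lemma eqmM N p p' q q' : eqm N p p' -> eqm N q q' -> eqm N (p * q) (p' * q').
Proof.
move=> h1 h2 i hi; rewrite !coefM; apply: eq_bigr => j _.
have hj : (j <= N)%N by apply: leq_trans hi; rewrite -ltnS.
rewrite h1 // h2 //; apply: leq_trans hi; exact: leq_subr.
Qed.
Lemma eqm_sub0 N p q : eqm N (p - q) 0 -> eqm N p q.
Proof. by move=> h i hi; move: (h i hi); rewrite coefB coef0 => /eqP; rewrite subr_eq0 => /eqP. Qed.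
Lemma eqm_Xn0 N d p : (N < d)%N -> eqm N ('X^d * p) 0.
Proof.
move=> hd i hi; rewrite coefXnM coef0 ifT //; exact: leq_ltn_trans hi hd.
Qed.
Lemma eqm_Xn0' N d : (N < d)%N -> eqm N ('X^d) 0.
Proof. by move=> hd; rewrite -[X in eqm _ X _]mulr1; apply: eqm_Xn0. Qed.

Lemma eqm_prod N (r : seq nat) (F G : nat -> {poly int}) :
  (forall j, j \in r -> eqm N (F j) (G j)) -> eqm N (\prod_(j <- r) F j) (\prod_(j <- r) G j).
Proof.
elim: r => [|x r IH] h; first by rewrite !big_nil.
rewrite !big_cons; apply: eqmM; first by apply: h; rewrite inE eqxx.
by apply: IH => j hj; apply: h; rewrite inE hj orbT.
Qed.
Lemma eqm_sum N (r : seq nat) (F G : nat -> {poly int}) :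
  (forall j, j \in r -> eqm N (F j) (G j)) -> eqm N (\sum_(j <- r) F j) (\sum_(j <- r) G j).
Proof.
elim: r => [|x r IH] h; first by rewrite !big_nil.
rewrite !big_cons; apply: eqmD; first by apply: h; rewrite inE eqxx.
by apply: IH => j hj; apply: h; rewrite inE hj orbT.
Qed.

Lemma geom_id N k : (1 - 'X^k) * geom_trunc N k = 1 - 'X^(k * N.+1).
Proof.
have := subrXX (1 : {poly int}) ('X^k) N.+1.
rewrite expr1n exprM => ->; rewrite /geom_trunc; congr (_ * _).
by apply: eq_bigr => i _; rewrite expr1n mul1r exprM.
Qed.

Lemma geom_inv N k : (0 < k)%N -> eqm N ((1 - 'X^k) * geom_trunc N k) 1.
Proof.
move=> hk; rewrite geom_id; rewrite -[X in eqm _ _ X]subr0; apply: eqmB => //.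
apply: eqm_Xn0'; nia.
Qed.

Definition theta (p : {poly int}) := 'X * p^`().

Lemma coef_theta p i : (theta p)`_i = p`_i *+ i.
Proof. by rewrite /theta coefXM; case: i => [|i] //=; rewrite ?mulr0n // coef_deriv. Qed.

Lemma thetaM p q : theta (p * q) = theta p * q + p * theta q.
Proof. by rewrite /theta derivM mulrDr mulrA [p * ('X * _)]mulrCA mulrA. Qed.
Lemma thetaD p q : theta (p + q) = theta p + theta q.
Proof. by rewrite /theta derivD mulrDr. Qed.
Lemma thetaB p q : theta (p - q) = theta p - theta q.
Proof. by rewrite /theta derivB mulrBr. Qed.
Lemma theta1 : theta 1 = 0.
Proof. by rewrite /theta -polyC1 derivC mulr0. Qed.
Lemma thetaXn k : theta ('X^k) = k%:R * 'X^k.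
Proof.
rewrite /theta derivXn; case: k => [|k] /=; first by rewrite !mulr0n mulr0 mul0r.
by rewrite -mulr_natl mulrCA -exprS.
Qed.
Lemma eqm_theta N p q : eqm N p q -> eqm N (theta p) (theta q).
Proof. by move=> h i hi; rewrite !coef_theta h. Qed.

Definition ee (N k : nat) : {poly int} := (2 * k)%:R * 'X^k * geom_trunc N (2 * k).

Lemma factor_eq N k : (0 < k)%N ->
  eqm N (theta ((1 + 'X^k) * geom_trunc N k))
        ((1 + 'X^k) * geom_trunc N k * ee N k).
Proof.
move=> hk.
set y : {poly int} := 'X^k; set G := geom_trunc N k; set H := geom_trunc N (2 * k).
have h1 : eqm N ((1 - y) * G) 1 by apply: geom_inv.
have hy2 : 'X^(2 * k) = y * y :> {poly int} by rewrite mul2n -addnn exprD.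
have h2 : eqm N ((1 - y * y) * H) 1 by rewrite -hy2; apply: geom_inv; rewrite muln_gt0.
have th1 : theta ((1 - y) * G) = (1 - y) * theta G - k%:R * y * G.
  by rewrite thetaM thetaB theta1 thetaXn -/y; ring.
have h3 : eqm N ((1 - y) * theta G) (k%:R * y * G).
  apply: eqm_sub0; rewrite -th1.
  have := eqm_theta h1; rewrite theta1; exact.
have h4 : eqm N (theta G) (k%:R * y * G * G).
  apply: eqm_trans (_ : eqm N (theta G * ((1 - y) * G)) _).
    by rewrite -[X in eqm _ X _]mulr1; apply: eqmM => //; apply: eqm_sym.
  have -> : theta G * ((1 - y) * G) = ((1 - y) * theta G) * G by ring.
  by apply: eqmM.
have thu : theta ((1 + y) * G) = k%:R * y * G + (1 + y) * theta G.
  by rewrite thetaM thetaD theta1 thetaXn -/y; ring.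
rewrite thu.
apply: eqm_trans (_ : eqm N (k%:R * y * G * 1 + (1 + y) * (k%:R * y * G * G)) _).
  by apply: eqmD; [rewrite mulr1 | apply: eqmM].
apply: eqm_trans (_ : eqm N (k%:R * y * G * ((1 - y) * G) + (1 + y) * (k%:R * y * G * G)) _).
  by apply: eqmD => //; apply: eqmM => //; apply: eqm_sym.
apply: eqm_sym.
apply: eqm_trans (_ : eqm N ((1 + y) * G * ((2 * k)%:R * y * H) * ((1 - y) * G)) _).
  by rewrite -[X in eqm _ X _]mulr1; apply: eqmM => //; apply: eqm_sym.
have -> : (1 + y) * G * ((2 * k)%:R * y * H) * ((1 - y) * G)
   = ((1 - y * y) * H) * ((2 * k)%:R * y * G * G) by ring.
apply: eqm_trans (_ : eqm N (1 * ((2 * k)%:R * y * G * G)) _).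
  by apply: eqmM.
apply: eqm_sub0; rewrite natrM.
have -> : 1 * (2%:R * k%:R * y * G * G) -
    (k%:R * y * G * ((1 - y) * G) + (1 + y) * (k%:R * y * G * G)) = 0 by ring.
by [].
Qed.

Definition fct N j : {poly int} :=
  (1 + 'X^j) * (1 + 'X^(2 * j)) * geom_trunc N j * geom_trunc N (2 * j).
Definition DD N : {poly int} := \sum_(1 <= j < N.+1) (ee N j + ee N (2 * j)).

Lemma theta_fct N j : (0 < j)%N ->
  eqm N (theta (fct N j)) (fct N j * (ee N j + ee N (2 * j))).
Proof.
move=> hj.
have -> : fct N j = ((1 + 'X^j) * geom_trunc N j) * ((1 + 'X^(2 * j)) * geom_trunc N (2 * j)).
  by rewrite /fct; ring.
rewrite thetaM.
set u := (1 + 'X^j) * _; set v := (1 + 'X^(2 * j)) * _.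
have -> : u * v * (ee N j + ee N (2 * j)) = (u * ee N j) * v + u * (v * ee N (2 * j)) by ring.
apply: eqmD; apply: eqmM => //; apply: factor_eq => //; by rewrite muln_gt0.
Qed.

Lemma theta_prod N M :
  eqm N (theta (\prod_(1 <= j < M.+1) fct N j))
        ((\prod_(1 <= j < M.+1) fct N j) * \sum_(1 <= j < M.+1) (ee N j + ee N (2 * j))).
Proof.
elim: M => [|M IH].
  by rewrite !big_geq // theta1 mulr0.
rewrite [\prod_(1 <= j < M.+2) _]big_nat_recr // [\sum_(1 <= j < M.+2) _]big_nat_recr //= thetaM.
set P := \prod_(1 <= j < M.+1) fct N j; set S := \sum_(1 <= j < M.+1) _.
have -> : P * fct N M.+1 * (S + (ee N M.+1 + ee N (2 * M.+1)))
  = (P * S) * fct N M.+1 + P * (fct N M.+1 * (ee N M.+1 + ee N (2 * M.+1))) by ring.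
by apply: eqmD; apply: eqmM => //; apply: theta_fct.
Qed.

Lemma rec_partial N i : (i <= N)%N ->
  (cubic_ovp_partial N)`_i *+ i = \sum_(k < i.+1) (DD N)`_k * (cubic_ovp_partial N)`_(i - k).
Proof.
move=> hi; rewrite -coef_theta (@theta_prod N N i hi) mulrC coefM //.
Qed.

Lemma geom_stab N M k : (0 < k)%N -> (N <= M)%N -> eqm N (geom_trunc M k) (geom_trunc N k).
Proof.
move=> hk hNM.
apply: eqm_trans (_ : eqm N (geom_trunc M k * ((1 - 'X^k) * geom_trunc N k)) _).
  by rewrite -[X in eqm _ X _]mulr1; apply: eqmM => //; apply: eqm_sym; apply: geom_inv.
have -> : geom_trunc M k * ((1 - 'X^k) * geom_trunc N k)
   = ((1 - 'X^k) * geom_trunc M k) * geom_trunc N k by ring.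
rewrite -[X in eqm _ _ X]mul1r; apply: eqmM => //.
by apply: eqm_le hNM _; apply: geom_inv.
Qed.

Lemma geom_one N M k : (N < k)%N -> eqm N (geom_trunc M k) 1.
Proof.
move=> hk.
have hk0 : (0 < k)%N by apply: leq_ltn_trans hk.
apply: eqm_trans (_ : eqm N ((1 - 'X^k) * geom_trunc M k) _).
  rewrite -[X in eqm _ X _]mul1r; apply: eqmM => //.
  rewrite -[X in eqm _ X _]subr0; apply: eqmB => //; apply: eqm_sym; exact: eqm_Xn0'.
case: (leqP N M) => hNM.
  by apply: eqm_le hNM _; apply: geom_inv.
rewrite geom_id; rewrite -[X in eqm _ _ X]subr0; apply: eqmB => //.
apply: eqm_Xn0'; nia.
Qed.

Lemma fct_stab N M j : (0 < j)%N -> (N <= M)%N -> eqm N (fct M j) (fct N j).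
Proof.
move=> hj hNM; rewrite /fct; apply: eqmM; [apply: eqmM => //|]; apply: geom_stab => //.
by rewrite muln_gt0.
Qed.

Lemma fct_one N M j : (N < j)%N -> eqm N (fct M j) 1.
Proof.
move=> hj; rewrite /fct -[X in eqm _ _ X]mulr1; apply: eqmM; last first.
  by apply: geom_one; nia.
rewrite -[X in eqm _ _ X]mulr1; apply: eqmM; last by apply: geom_one.
rewrite -[X in eqm _ _ X]mulr1; apply: eqmM;
  rewrite -[X in eqm _ _ X]addr0; apply: eqmD => //; apply: eqm_Xn0'; nia.
Qed.

Lemma partial_stab N M : (N <= M)%N -> eqm N (cubic_ovp_partial M) (cubic_ovp_partial N).
Proof.
move=> hNM; rewrite /cubic_ovp_partial (big_cat_nat _ (n:=N.+1)) //=.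
rewrite -[X in eqm _ _ X]mulr1; apply: eqmM.
  apply: eqm_prod => j; rewrite mem_index_iota => /andP[hj _]; exact: fct_stab.
apply: (@eqm_trans N _ (\prod_(j <- index_iota N.+1 M.+1) (1 : {poly int}))); last by rewrite big1.
apply: eqm_prod => j; rewrite mem_index_iota => /andP[hj _]; exact: fct_one.
Qed.

Lemma cubic_stab i N : (i <= N)%N -> cubic_ovp i = (cubic_ovp_partial N)`_i.
Proof. by move=> hi; rewrite /cubic_ovp (partial_stab hi). Qed.

Lemma ee_stab N M k : (0 < k)%N -> (N <= M)%N -> eqm N (ee M k) (ee N k).
Proof.
move=> hk hNM; rewrite /ee; apply: eqmM => //; apply: geom_stab => //; by rewrite muln_gt0.
Qed.

Lemma ee_zero N M k : (N < k)%N -> eqm N (ee M k) 0.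
Proof.
move=> hk; rewrite /ee.
have -> : (2 * k)%:R * 'X^k * geom_trunc M (2 * k) = 'X^k * ((2 * k)%:R * geom_trunc M (2 * k)) by ring.
exact: eqm_Xn0.
Qed.

Lemma DD_stab N M : (N <= M)%N -> eqm N (DD M) (DD N).
Proof.
move=> hNM; rewrite /DD (big_cat_nat _ (n:=N.+1)) //=.
rewrite -[X in eqm _ _ X]addr0; apply: eqmD.
  apply: eqm_sum => j; rewrite mem_index_iota => /andP[hj _].
  by apply: eqmD; apply: ee_stab => //; rewrite muln_gt0.
apply: (@eqm_trans N _ (\sum_(j <- index_iota N.+1 M.+1) (0 : {poly int}))); last by rewrite big1.
apply: eqm_sum => j; rewrite mem_index_iota => /andP[hj _].
rewrite -[X in eqm _ _ X]addr0; apply: eqmD; apply: ee_zero; nia.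
Qed.

Definition cc k : int := (DD k)`_k.

Lemma cubic_rec s : cubic_ovp s *+ s = \sum_(k < s.+1) cc k * cubic_ovp (s - k).
Proof.
rewrite {1}/cubic_ovp rec_partial //; apply: eq_bigr => k _.
have hk : (k <= s)%N by rewrite -ltnS.
rewrite /cc (DD_stab hk) // (@cubic_stab (s - k) s) //; exact: leq_subr.
Qed.

Lemma cubic0 : cubic_ovp 0 = 1.
Proof. by rewrite /cubic_ovp /cubic_ovp_partial big_geq // coefC. Qed.

Lemma coef_geom N m l : (0 < m)%N -> (l <= N)%N -> (geom_trunc N m)`_l = (m %| l)%N%:R.
Proof.
move=> hm hl; rewrite /geom_trunc coef_sum.
under eq_bigr do rewrite coefXn.
case: (boolP (m %| l)%N) => hd.
  move: hd hl => /dvdnP [q ->] hl.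
  have hq : (q < N.+1)%N by nia.
  transitivity (\sum_(i < N.+1 | (i : nat) == q) (1 : int)); last by rewrite (big_ord1_eq _ (fun=> (1:int)) q N.+1) hq.
  rewrite [RHS]big_mkcond /=.
  apply: eq_bigr => i _; rewrite (mulnC m) eqn_pmul2r //; by rewrite eq_sym; case: (_ == _).
rewrite big1 // => i _; case: eqP => // h; exfalso; move/negP: hd; apply; by rewrite h dvdn_mulr.
Qed.

Definition tN (k m : nat) : nat := if (k < m)%N then 0%N else ((2 * m %| k - m) * (2 * m))%N.

Lemma coef_ee N m i : (0 < m)%N -> (i <= N)%N -> (ee N m)`_i = (tN i m)%:R.
Proof.
move=> hm hi; rewrite /ee.
have -> : (2 * m)%:R * 'X^m * geom_trunc N (2 * m) = 'X^m * (geom_trunc N (2 * m) *+ (2 * m)).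
  by rewrite -mulr_natl; ring.
rewrite coefXnM /tN; case: ifP => // _.
rewrite coefMn coef_geom ?muln_gt0 //; last by apply: leq_trans hi; exact: leq_subr.
by rewrite natrM mulr_natr.
Qed.

Definition cN (k : nat) : nat := (\sum_(1 <= j < k.+1) (tN k j + tN k (2 * j)))%N.

Lemma cc_eq k : cc k = (cN k)%:R.
Proof.
rewrite /cc /DD /cN coef_sum natr_sum; apply: eq_big_nat => j /andP[hj _].
by rewrite coefD !coef_ee ?muln_gt0 // natrD.
Qed.

Lemma cN_lb k : (0 < k)%N -> (2 * k <= cN k)%N.
Proof.
move=> hk; rewrite /cN big_nat_recr //=.
apply: leq_trans (leq_addl _ _); apply: leq_trans (leq_addr _ _).
by rewrite /tN ltnn subnn dvdn0 mul1n.
Qed.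

Lemma tN_le k m : (tN k m <= (if (k < m)%N then 0 else 2 * m))%N.
Proof. by rewrite /tN; case: ifP => // _; case: (_ %| _)%N; rewrite ?mul1n ?mul0n. Qed.

Lemma cN_ub k : (cN k <= 4 * k * k)%N.
Proof.
rewrite /cN; apply: leq_trans (_ : (\sum_(1 <= j < k.+1) (4 * k) <= _)%N).
  rewrite big_nat_cond [X in (_ <= X)%N]big_nat_cond; apply: leq_sum => j /andP[/andP[hj hjk] _].
  have h1 := tN_le k j; have h2 := tN_le k (2 * j); move: h1 h2.
  case: ltnP => ?; case: ltnP => ?; lia.
rewrite sum_nat_const_nat; lia.
Qed.

Notation a := cubic_ovp.
Definition cz k : int := (cN k)%:R.

Lemma cz0 : cz 0 = 0. Proof. by rewrite /cz /cN big_geq. Qed.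
Lemma cz_lb k : (0 < k)%N -> (2 * k)%:R <= cz k.
Proof. by move=> hk; rewrite /cz ler_nat cN_lb. Qed.
Lemma cz_ub k : cz k <= (4 * k * k)%:R.
Proof. by rewrite /cz ler_nat cN_ub. Qed.
Lemma cz_ge0 k : 0 <= cz k.
Proof. by rewrite /cz ler0n. Qed.

Lemma arec s : a s * s%:R = \sum_(k < s.+1) cz k * a (s - k).
Proof. by rewrite mulr_natr cubic_rec; apply: eq_bigr => k _; rewrite cc_eq. Qed.

Lemma arec' s : a s * s%:R = \sum_(k < s) cz k.+1 * a (s - k.+1).
Proof. by rewrite arec big_ord_recl cz0 mul0r add0r. Qed.

Lemma a_ge0 n : 0 <= a n.
Proof.
elim: n {-2}n (leqnn n) => [|N IH] n hn.
  by move: hn; rewrite leqn0 => /eqP ->; rewrite cubic0.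
case: n hn => [|n] hn; first by rewrite cubic0.
have : 0 <= a n.+1 * n.+1%:R.
  rewrite arec'; apply: sumr_ge0 => k _; apply: mulr_ge0; first exact: cz_ge0.
  apply: IH; rewrite subSS; apply: leq_trans (leq_subr _ _) _; by rewrite -ltnS.
by rewrite pmulr_lge0 // ltr0n.
Qed.

Lemma am_ge n : (0 < n)%N -> (2 * n)%:R <= a n * n%:R.
Proof.
case: n => [|n] // _; rewrite arec' big_ord_recr /= subnn cubic0 mulr1.
apply: le_trans (cz_lb _) _ => //; rewrite lerDr; apply: sumr_ge0 => k _.
by apply: mulr_ge0; [exact: cz_ge0 | exact: a_ge0].
Qed.

Definition Tt (n k : int) : int := 2 * (k + 1) * (25 * (n - k - 1) ^+ 2 - 50 * 100).

Lemma sumT n N : 12 * (\sum_(k < N) Tt n k%:R) =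
  300 * n ^+ 2 * N%:R * (N%:R + 1) - 200 * n * N%:R * (N%:R + 1) * (2 * N%:R + 1)
  + 150 * N%:R ^+ 2 * (N%:R + 1) ^+ 2 - 6 * 100 * 100 * N%:R * (N%:R + 1).
Proof.
elim: N => [|N IH]; first by rewrite big_ord0; ring.
rewrite big_ord_recr /= mulrDr IH /Tt -natr1; ring.
Qed.

Lemma a_lb (H25 : forall n, (n <= 40)%N -> (25 * n * n)%:R - 50 * 100 <= a n) n :
  (25 * n * n)%:R - 50 * 100 <= a n.
Proof.
elim: n {-2}n (leqnn n) => [|N IH] n hn; first by apply: H25; apply: leq_trans hn _.
case: (leqP n 40) => h40; first exact: H25.
have hsum : \sum_(k < n) Tt n%:R k%:R <= a n * n%:R.
  rewrite arec'; apply: ler_sum => k _.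
  have hk : (k.+1 <= n)%N by [].
  have hm : (n - k.+1 <= N)%N by lia.
  have hL := IH _ hm.
  have ha := a_ge0 (n - k.+1).
  have hc := cz_lb (ltn0Sn k).
  have e1 : ((n - k.+1)%:R : int) = n%:R - k%:R - 1.
    rewrite natrB // -addn1 natrD; ring.
  have e2 : ((2 * k.+1)%:R : int) = 2 * (k%:R + 1).
    by rewrite natrM natr1.
  rewrite !natrM e1 in hL; rewrite e2 in hc.
  move: hL ha hc; rewrite /Tt.
  set x := a _; set y := cz _; set u := (k%:R : int); set v := (n%:R : int).
  move=> hL ha hc.
  have hu : 0 <= 2 * (u + 1) by rewrite mulr_ge0 // addr_ge0.
  apply: le_trans (_ : 2 * (u + 1) * x <= _).
    apply: ler_wpM2l => //.
    move: hL; rewrite expr2 !mulrA; exact.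
  by apply: ler_wpM2r.
have h12 := sumT n%:R n.
have hv : 41 <= (n%:R : int) by rewrite (ler_nat int 41 n).
move: hsum h12; set S := \sum_(k < n) _; set x := a n; set v := (n%:R : int).
rewrite !natrM -/v; move=> hsum h12.
have hQ : 0 <= 50 * v ^+ 2 - 300 * v - (6 * 100 * 100 + 50).
  have h1 : 0 <= (v - 41) * (50 * v + 1750) by apply: mulr_ge0; lra.
  lra.
have hS : 12 * S = 50 * v ^+ 2 * (v ^+ 2 - 1) - 6 * 100 * 100 * v * (v + 1) by rewrite h12; ring.
case: (lerP (25 * v * v - 50 * 100) x) => // hlt; exfalso.
have h2 : x * v < (25 * v * v - 50 * 100) * v by rewrite ltr_pM2r //; lra.
have h3 : 0 <= v ^+ 2 * (50 * v ^+ 2 - 300 * v - (6 * 100 * 100 + 50)) by rewrite mulr_ge0 // sqr_ge0.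
have h4 : 12 * S <= 12 * (x * v) by rewrite ler_pM2l.
have e : v ^+ 2 * (50 * v ^+ 2 - 300 * v - (6 * 100 * 100 + 50)) =
  (50 * v ^+ 2 * (v ^+ 2 - 1) - 6 * 100 * 100 * v * (v + 1)) - 12 * ((25 * v * v - 50 * 100) * v) by ring.
rewrite -hS in e.
lra.
Qed.

Lemma an_n n : \sum_(0 <= k < n.+1) cz k * a (n - k) = a n * n%:R.
Proof. by rewrite arec big_mkord. Qed.

Lemma W_bound m : 2 * \sum_(1 <= i < m.+1) a (m - i) <= a m * m%:R.
Proof.
rewrite -an_n [in X in _ <= X]big_ltn // cz0 mul0r add0r mulr_sumr; apply: ler_sum_nat => i /andP[hi _].
apply: ler_wpM2r; first exact: a_ge0.
apply: le_trans (cz_lb hi); rewrite (ler_nat int 2 (2 * i)); lia.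
Qed.

Lemma strict_step n m : (0 < m)%N -> (m <= n)%N -> (3 <= n)%N ->
  (24 * n * n)%:R < a n ->
  (forall n' m', (0 < n')%N -> (0 < m')%N -> (n' + m' < n + m)%N ->
     a (n' + m') <= a n' * a m' + (if (n' + m' <= 4)%N then 2 else 0)) ->
  a (n + m) < a n * a m.
Proof.
move=> hm hmn hn3 Hbig IH.
set s := (n + m)%N.
set ite := fun k => (if (n - k + m <= 4)%N then 2 else 0 : int).
have hA : \sum_(0 <= k < n.+1) cz k * a (s - k)
    <= a n * n%:R * a m + \sum_(0 <= k < n.+1) cz k * ite k.
  rewrite -an_n mulr_suml -big_split /=; apply: ler_sum_nat => k /andP[_ hk].
  have e : (s - k = (n - k) + m)%N by rewrite /s; lia.
  rewrite e; case: (ltnP k n) => hkn.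
    case: k hk e hkn => [|k] hk e hkn; first by rewrite cz0 !mul0r addr0.
    have h := IH (n - k.+1)%N m ltac:(lia) hm ltac:(lia).
    apply: le_trans (ler_wpM2l (cz_ge0 k.+1) h) _.
    by rewrite mulrDr mulrA /ite.
  have -> : (n - k = 0)%N by lia.
  rewrite add0n cubic0 mulr1 lerDl mulr_ge0 ?cz_ge0 // /ite; by case: ifP.
have hE : \sum_(0 <= k < n.+1) cz k * ite k <= 32 * (n%:R) ^+ 2.
  rewrite (big_cat_nat _ (n:=(n-3)%N)) //=; last by lia.
  rewrite big_nat_cond big1 ?add0r; last first.
    move=> k /andP[/andP[_ hk] _]; rewrite /ite; case: ifP => h; last by rewrite mulr0.
    exfalso; move: h; lia.
  apply: le_trans (ler_sum_nat (G := fun _ => 8 * n%:R ^+ 2) _) _.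
    move=> k /andP[_ hk]; rewrite /ite.
    have hc := cz_ub k; have hc0 := cz_ge0 k.
    have hkn : (k%:R : int) <= n%:R by rewrite ler_nat -ltnS.
    have hk0 : (0 : int) <= k%:R by [].
    move: hc; rewrite !natrM => hc.
    case: ifP => _; last by rewrite mulr0 mulr_ge0 // sqr_ge0.
    nia.
  rewrite sumr_const_nat.
  have -> : (n.+1 - (n - 3) = 4)%N by lia.
  rewrite -mulr_natr; lra.
have hB : \sum_(n.+1 <= k < s.+1) cz k * a (s - k)
    <= 16 * n%:R ^+ 2 * \sum_(1 <= i < m.+1) a (m - i).
  apply: le_trans (_ : \sum_(n.+1 <= k < s.+1) 16 * n%:R ^+ 2 * a (s - k) <= _).
    apply: ler_sum_nat => k /andP[hk1 hk2]; apply: ler_wpM2r; first exact: a_ge0.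
    apply: le_trans (cz_ub k) _.
    have hks : (4 * k * k <= 16 * n * n)%N by rewrite /s in hk2; nia.
    by rewrite -(ler_nat int) in hks; apply: le_trans hks _; rewrite !natrM; lra.
  rewrite -mulr_sumr; apply: ler_wpM2l; first by rewrite mulr_ge0 // sqr_ge0.
  rewrite -[n.+1]/(1 + n)%N big_addn.
  have -> : (s.+1 - n = m.+1)%N by rewrite /s; lia.
  rewrite (eq_big_nat _ _ (F2 := fun i => a (m - i))) // => i /andP[hi1 hi2].
  congr (a _); rewrite /s; lia.
have hs : a s * s%:R = \sum_(0 <= k < n.+1) cz k * a (s - k) + \sum_(n.+1 <= k < s.+1) cz k * a (s - k).
  by rewrite arec -(big_mkord xpredT (fun k => cz k * a (s - k))) (big_cat_nat _ (n:=n.+1)) //= /s; lia.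
have hW := W_bound m.
have hP := am_ge hm.
have hsR : (s%:R : int) = n%:R + m%:R by rewrite /s natrD.
move: hA hE hB hs hW hP Hbig hsR.
set S1 := \sum_(0 <= k < n.+1) _; set S2 := \sum_(0 <= k < n.+1) _; set S3 := \sum_(n.+1 <= k < s.+1) _.
set W := \sum_(1 <= i < m.+1) _.
set x := a s; set an := a n; set am := a m; set v := (n%:R : int); set w := (m%:R : int); set sv := (s%:R : int).
rewrite !natrM -/v.
move=> hA hE hB hs hW hP Hbig hsR.
have hv : 3 <= v by rewrite /v (ler_nat int 3 n).
have hw : 1 <= w by rewrite /w (ler_nat int 1 m).
have hP2 : 2 <= am * w by apply: le_trans hP; lra.
have hv2 : 0 <= v ^+ 2 by rewrite sqr_ge0.
have h1 : 32 * v ^+ 2 <= 16 * v ^+ 2 * (am * w).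
  have := ler_wpM2l (_ : 0 <= 16 * v ^+ 2) hP2; rewrite mulr_ge0 //; lra.
have h2 : 16 * v ^+ 2 * W <= 8 * v ^+ 2 * (am * w).
  have := ler_wpM2l (_ : 0 <= 8 * v ^+ 2) hW; rewrite mulr_ge0 //; lra.
have h3 : 24 * v ^+ 2 * (am * w) < an * (am * w).
  rewrite ltr_pM2r; [by rewrite expr2 mulrA | lra].
have h4 : x * sv < an * am * sv.
  rewrite hs hsR.
  have e1 : an * am * (v + w) = an * v * am + an * (am * w) by ring.
  rewrite e1.
  have e2 : 16 * v ^+ 2 * (am * w) + 8 * v ^+ 2 * (am * w) = 24 * v ^+ 2 * (am * w) by ring.
  lra.
by move: h4; rewrite ltr_pM2r // hsR; lra.
Qed.

Definition cNc (k : nat) : nat := sumn [seq (tN k j + tN k (2 * j))%N | j <- iota 1 k].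

Lemma cN_cNc k : cN k = cNc k.
Proof.
rewrite /cN /cNc sumnE big_map /index_iota; congr (\sum_(j <- iota 1 _) _); lia.
Qed.

Definition czZ (k : nat) : Z := Z.of_nat (cNc k).
Fixpoint sumZ (f : nat -> Z) (n : nat) : Z :=
  match n with 0 => Z0 | S n => Z.add (sumZ f n) (f n) end.
Definition stepZ (n : nat) (t : seq Z) : Z :=
  Z.div (sumZ (fun k => Z.mul (czZ k.+1) (nth Z0 t k)) n) (Z.of_nat n).
Fixpoint tabZ (n : nat) : seq Z :=
  match n with 0 => [:: Zpos xH] | S n' => let t := tabZ n' in stepZ n t :: t end.
Definition aZ n := head Z0 (tabZ n).

Lemma tabZ_nth n k : (k <= n)%N -> nth Z0 (tabZ n) k = aZ (n - k).
Proof.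
elim: n k => [|n IH] [|k] //= hk.
by rewrite IH.
Qed.

Lemma Z_of_int_sum (F : nat -> int) N :
  Z_of_int (\sum_(k < N) F k) = sumZ (fun k => Z_of_int (F k)) N.
Proof.
elim: N => [|N IH]; first by rewrite big_ord0.
rewrite big_ord_recr /= raddfD.
change (Z.add (Z_of_int (\sum_(i < N) F i)) (Z_of_int (F N)) = Z.add (sumZ (fun k => Z_of_int (F k)) N) (Z_of_int (F N))); by rewrite IH.
Qed.

Lemma sumZ_ext f g N : (forall k, (k < N)%N -> f k = g k) -> sumZ f N = sumZ g N.
Proof.
elim: N => [|N IH] h //=; rewrite IH ?h // => k hk; apply: h; exact: ltnW.
Qed.

Lemma a_aZ n : Z_of_int (a n) = aZ n.
Proof.
elim: n {-2}n (leqnn n) => [|N IH] n hn.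
  by move: hn; rewrite leqn0 => /eqP ->; rewrite cubic0.
case: n hn => [|s] hn; first by rewrite cubic0.
rewrite /aZ /= /stepZ.
have e : sumZ (fun k => Z.mul (czZ k.+1) (nth Z0 (tabZ s) k)) s.+1
       = Z_of_int (a s.+1 * s.+1%:R).
  rewrite arec' (Z_of_int_sum (fun k => cz k.+1 * a (s.+1 - k.+1))); apply: sumZ_ext => k hk.
  rewrite tabZ_nth; last by rewrite -ltnS.
  rewrite -IH; last by lia.
  have -> : (s - k = s.+1 - k.+1)%N by [].
  rewrite /cz cN_cNc /czZ; lia.
rewrite e.
have -> : Z_of_int (a s.+1 * s.+1%:R) = Z.mul (Z_of_int (a s.+1)) (Z.of_nat s.+1) by lia.
rewrite Z.div_mul //; lia.
Qed.

Module Checks.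

Local Open Scope Z_scope.
Definition vz (t : seq Z) (n : nat) : Z := nth Z0 t (71 - n).
Definition zn (n : nat) : Z := Z.of_nat n.

Definition chkA (t : seq Z) : bool :=
  all (fun n => Z.ltb (Z.mul 24 (Z.mul (zn n) (zn n))) (vz t n)) (iota 14 58).
Definition chkB (t : seq Z) : bool :=
  all (fun n => Z.leb (Z.sub (Z.mul 25 (Z.mul (zn n) (zn n))) 5000) (vz t n)) (iota 0 41).
Definition chkC (t : seq Z) : bool :=
  all (fun n => all (fun m => (n + m <= 26)%N ==>
     Z.leb (vz t (n + m)) (Z.add (Z.mul (vz t n) (vz t m)) (if (n + m <= 4)%N then 2 else 0)))
   (iota 1 25)) (iota 1 25).
Definition excl (n m : nat) : bool := ((n == 1%N) && (m == 1%N)) || ((n == 1%N) && (m == 3%N)) || ((n == 3%N) && (m == 1%N)).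
Definition eqok (n m : nat) : bool := ((n == 1%N) && (m == 2%N)) || ((n == 2%N) && (m == 1%N)).
Definition chkD (t : seq Z) : bool :=
  all (fun n => all (fun m => ((n + m <= 26)%N && ~~ excl n m) ==>
     (Z.leb (vz t (n + m)) (Z.mul (vz t n) (vz t m)) &&
      (Z.eqb (Z.mul (vz t n) (vz t m)) (vz t (n + m)) ==> eqok n m)))
   (iota 1 25)) (iota 1 25).
Definition chkAll (t : seq Z) : bool := [&& chkA t, chkB t, chkC t & chkD t].

Lemma chk_ok : chkAll (tabZ 71) = true.
Proof. vm_compute. reflexivity. Qed.

End Checks.
Import Checks.

Definition T71 := locked (tabZ 71).

Lemma vz_a n : (n <= 71)%N -> vz T71 n = Z_of_int (a n).
Proof. by move=> hn; rewrite /T71 -lock /vz tabZ_nth ?leq_subr // subKn // a_aZ. Qed.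

Lemma chk_parts : [/\ chkA T71, chkB T71, chkC T71 & chkD T71].
Proof. by have := chk_ok; rewrite /chkAll /T71 -lock => /and4P. Qed.

Lemma H24 n : (14 <= n <= 71)%N -> (24 * n * n)%:R < a n.
Proof.
move=> /andP[h1 h2]; have [hA _ _ _] := chk_parts.
have := allP hA n; rewrite mem_iota h1 => /(_ ltac:(lia)).
rewrite vz_a // /zn => /Z.ltb_lt; lia.
Qed.

Lemma H25 n : (n <= 40)%N -> (25 * n * n)%:R - 50 * 100 <= a n.
Proof.
move=> h; have [_ hB _ _] := chk_parts.
have := allP hB n; rewrite mem_iota => /(_ ltac:(lia)).
rewrite vz_a /zn; last by lia.
move=> /Z.leb_le; lia.
Qed.

Lemma Hsmall n m : (0 < n)%N -> (0 < m)%N -> (n + m <= 26)%N ->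
  a (n + m) <= a n * a m + (if (n + m <= 4)%N then 2 else 0).
Proof.
move=> hn hm hs; have [_ _ hC _] := chk_parts.
have := allP hC n; rewrite mem_iota => /(_ ltac:(lia)) /allP /(_ m).
rewrite mem_iota => /(_ ltac:(lia)) /implyP /(_ hs).
rewrite !vz_a; try lia.
case: (n + m <= 4)%N => /Z.leb_le; lia.
Qed.

Lemma a_big n : (14 <= n)%N -> (24 * n * n)%:R < a n.
Proof.
move=> h; case: (leqP n 71) => h71; first by apply: H24; rewrite h.
have := a_lb H25 n.
have hv : 72 <= (n%:R : int) by rewrite (ler_nat int 72 n).
rewrite !natrM; set x := a n; set v := (n%:R : int) => hl.
have : 72 * 72 <= v * v by apply: ler_pM; lra.
lra.
Qed.

Lemma main_bound s : forall n m, (0 < n)%N -> (0 < m)%N -> (n + m <= s)%N ->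
  a (n + m) <= a n * a m + (if (n + m <= 4)%N then 2 else 0) /\
  ((26 < n + m)%N -> a (n + m) < a n * a m).
Proof.
elim: s => [|s IH] n m hn hm hs; first by lia.
case: (leqP (n + m) 26) => h26.
  split; [exact: Hsmall | lia].
have strict : a (n + m) < a n * a m.
  have IH' : forall n' m', (0 < n')%N -> (0 < m')%N -> (n' + m' < n + m)%N ->
     a (n' + m') <= a n' * a m' + (if (n' + m' <= 4)%N then 2 else 0).
    move=> n' m' h1 h2 h3; have [H _] := IH n' m' h1 h2 ltac:(lia); exact: H.
  case: (leqP m n) => hmn.
    apply: strict_step => //; [lia | apply: a_big; lia].
  rewrite addnC mulrC; apply: strict_step => //; [lia | lia | apply: a_big; lia |].
  by move=> n' m' h1 h2 h3; apply: IH' => //; lia.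
split; last by move=> _.
have -> : (n + m <= 4)%N = false by lia.
by rewrite addr0 ltW.
Qed.

Unset Implicit Arguments.
Theorem theorem2p6 (n m : nat) :
  (1 <= n)%N -> (1 <= m)%N ->
  ~ (n = 1%N /\ m = 1%N) ->
  ~ ((n = 1%N /\ m = 3%N) \/ (n = 3%N /\ m = 1%N)) ->
  cubic_ovp (n + m) <= cubic_ovp n * cubic_ovp m /\
  (cubic_ovp n * cubic_ovp m = cubic_ovp (n + m) ->
     (n = 1%N /\ m = 2%N) \/ (n = 2%N /\ m = 1%N)).
Proof.
move=> hn hm h11 h13.
case: (leqP (n + m) 26) => hs; last first.
  have [_ hlt] := @main_bound (n + m) n m hn hm (leqnn _).
  have := hlt hs => hl; split; first exact: ltW.
  by move=> e; move: hl; rewrite e ltxx.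
have hex : excl n m = false.
  rewrite /excl; apply/negbTE; apply/negP => /orP[/orP[]|] /andP[/eqP e1 /eqP e2].
  - by apply: h11.
  - by apply: h13; left.
  - by apply: h13; right.
have [_ _ _ hD] := chk_parts.
have := allP hD n; rewrite mem_iota => /(_ ltac:(lia)) /allP /(_ m).
rewrite mem_iota => /(_ ltac:(lia)) /implyP; rewrite hs hex => /(_ isT) /andP[hle himp].
move: hle himp; rewrite !vz_a; try lia.
move=> /Z.leb_le hle himp; split; first lia.
move=> e; have : Z.eqb (Z_of_int (a n) * Z_of_int (a m))%Z (Z_of_int (a (n + m))) = true.
  by apply/Z.eqb_eq; rewrite -e; lia.
move=> he; move: (implyP himp he); rewrite /eqok.
by case/orP => /andP[/eqP -> /eqP ->]; [left | right].
Qed.
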